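(* Let $G$ be a finite simple graph with vertices ordered as $V(G)=\{u_1,\dots,u_n\}$, and let $\widehat{G}$ be the graph constructed from $G$ and this ordering as follows: $V(\widehat{G})=\{(u_i,u_j)\,:\,1\le i<j\le n,\ u_iu_j\in E(G)\}$, and two distinct vertices $(u_i,u_j)$ and $(u_k,u_l)$ of $\widehat{G}$ with $j\le l$ are adjacent if and only if $i=k$, or $j=k$, or ($j=l$ and $u_iu_k\notin E(G)$). Then \[ h^*(G,x)=I(\widehat{G},x). \] Moreover, if $e=u_{n-1}u_n\in E(G)$, then $\widehat{G-e}$ (constructed from $G-e$ with the same vertex ordering) is a subgraph of $\widehat{G}$.
   Context: For a graph $G$ on $n$ vertices, let $a_k(G)$ denote the number of partitions of $V(G)$ into exactly $k$ parts each of which induces a complete subgraph of $G$. The adjoint polynomial is $h(G,x)=\sum_{k=1}^n(-1)^{n-k}a_k(G)x^k$, and $h^*(G,x)=x^n h(G,1/x)=\sum_{k=0}^{n-1}(-1)^k a_{n-k}(G)x^k$. For a graph $H$, the independence polynomial is $I(H,x)=\sum_{k\ge 0}(-1)^k i_k(H)x^k$, where $i_k(H)$ is the number of independent sets of size $k$ in $H$ (with $i_0(H)=1$). $G-e$ denotes the graph obtained from $G$ by deleting the edge $e$. *)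

(* Defs.v *)
From mathcomp Require Import all_boot all_order all_algebra.
Set Implicit Arguments. Unset Strict Implicit. Unset Printing Implicit Defensive.
Import GRing.Theory.
Local Open Scope ring_scope.

(* A finite simple graph on the ordered vertex set u_1 < ... < u_n is
   represented on 'I_n (u_{i+1} is the ordinal i) by a relation adj,
   assumed symmetric and irreflexive in the theorem. *)

Definition is_clique (n : nat) (adj : rel 'I_n) (B : {set 'I_n}) : bool :=
  [forall x in B, forall y in B, (x != y) ==> adj x y].

Definition a_k (n : nat) (adj : rel 'I_n) (k : nat) : nat :=
  #|[set P : {set {set 'I_n}} | [&& partition P [set: 'I_n],
        [forall B in P, is_clique adj B] & #|P| == k]]|.

Definition hstar (n : nat) (adj : rel 'I_n) : {poly int} :=
  \sum_(k < n) (((-1) ^+ k * ((a_k adj (n - k))%:R : int)) *: 'X^k).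

Definition del_edge (n : nat) (adj : rel 'I_n) (a b : 'I_n) : rel 'I_n :=
  fun x y => adj x y && ~~ (((x == a) && (y == b)) || ((x == b) && (y == a))).

Definition hat_V (n : nat) (adj : rel 'I_n) : {set 'I_n * 'I_n} :=
  [set p : 'I_n * 'I_n | (p.1 < p.2)%N && adj p.1 p.2].

Definition hat_cond (n : nat) (adj : rel 'I_n) (i j k l : 'I_n) : bool :=
  [|| i == k, j == k | (j == l) && ~~ adj i k].

Definition hat_adj (n : nat) (adj : rel 'I_n) : rel ('I_n * 'I_n) :=
  fun p q => (p != q) &&
    (if (p.2 <= q.2)%N then hat_cond adj p.1 p.2 q.1 q.2
     else hat_cond adj q.1 q.2 p.1 p.2).

Definition hat_indep (n : nat) (adj : rel 'I_n) (S : {set 'I_n * 'I_n}) : bool :=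
  (S \subset hat_V adj) &&
  [forall p in S, forall q in S, ~~ hat_adj adj p q].

Definition i_k (n : nat) (adj : rel 'I_n) (k : nat) : nat :=
  #|[set S : {set 'I_n * 'I_n} | hat_indep adj S && (#|S| == k)]|.

(* I(\hat G, x) = sum_k (-1)^k i_k x^k (i_k = 0 for k > |V(\hat G)|). *)
Definition indep_poly_hat (n : nat) (adj : rel 'I_n) : {poly int} :=
  \sum_(k < #|hat_V adj|.+1) (((-1) ^+ k * ((i_k adj k)%:R : int)) *: 'X^k).

Definition hat_subgraph (n : nat) (adjH adjG : rel 'I_n) : Prop :=
  hat_V adjH \subset hat_V adjG /\
  (forall p q, p \in hat_V adjH -> q \in hat_V adjH ->
     hat_adj adjH p q -> hat_adj adjG p q).

(* Main.v *)
Require Import Defs.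
From mathcomp Require Import all_boot all_order all_algebra zify.
Set Implicit Arguments. Unset Strict Implicit. Unset Printing Implicit Defensive.

Section S.
Variable n : nat.
Variable adj : rel 'I_n.
Hypothesis adj_sym : symmetric adj.
Hypothesis adj_irr : irreflexive adj.

Definition validf (r : {ffun 'I_n -> 'I_n}) :=
  [forall x : 'I_n, (x <= r x)%N && (r (r x) == r x)] &&
  [forall x : 'I_n, forall y : 'I_n, ((x != y) && (r x == r y)) ==> adj x y].

Definition nfix (r : {ffun 'I_n -> 'I_n}) := [set x | r x != x].

Definition VR k := [set r | validf r && (#|nfix r| == k)].

Definition phi (r : {ffun 'I_n -> 'I_n}) : {set 'I_n * 'I_n} :=
  [set p | (p.1 != p.2) && (r p.1 == p.2)].

Lemma validP r : validf r ->
  (forall x : 'I_n, (x <= r x)%N) /\ (forall x, r (r x) = r x) /\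
  (forall x y, x != y -> r x = r y -> adj x y).
Proof.
case/andP=> /forallP H1 /forallP H2; split; [|split].
- by move=> x; case/andP: (H1 x).
- by move=> x; case/andP: (H1 x) => _ /eqP.
- move=> x y nxy rxy; move/forallP: (H2 x) => /(_ y) /implyP; apply.
  by rewrite nxy rxy eqxx.
Qed.

Lemma phi_inj : injective phi.
Proof.
move=> r r' E; apply/ffunP => x.
have h : forall r r', phi r = phi r' -> r x != x -> r' x = r x.
  move=> s s' E' nx.
  have : (x, s x) \in phi s by rewrite inE /= eq_sym nx eqxx.
  by rewrite E' inE /= => /andP[_ /eqP].
case: (eqVneq (r x) x) => [rx|rx]; last by rewrite (h _ _ E).
case: (eqVneq (r' x) x) => [r'x|r'x]; first by rewrite rx r'x.
by rewrite -(h _ _ (esym E) r'x).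
Qed.

Lemma phi_card r : #|phi r| = #|nfix r|.
Proof.
have -> : phi r = [set (x, r x) | x in nfix r].
  apply/setP => -[a b]; rewrite inE /=; apply/andP/imsetP.
  - case=> ab /eqP rab; exists a; last by rewrite rab. by rewrite inE rab eq_sym.
  - by case=> x; rewrite inE => nx [-> ->]; rewrite eq_sym nx.
by rewrite card_imset // => x y [].
Qed.

Lemma phi_indep r : validf r -> hat_indep adj (phi r).
Proof.
move=> /validP [H1 [H2 H3]]; apply/andP; split.
  apply/subsetP => -[a b]; rewrite !inE /= => /andP [ab /eqP rab].
  rewrite ltn_neqAle -rab H1 andbT; apply/andP; split.
    by rewrite -val_eqE /= in ab; rewrite rab.
  apply: (H3 a (r a)); [by rewrite rab | by rewrite H2].
apply/forallP => -[a b]; apply/implyP; rewrite inE /= => /andP [ab /eqP rab].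
apply/forallP => -[c d]; apply/implyP; rewrite inE /= => /andP [cd /eqP rcd].
case: (eqVneq (a, b) (c, d)) => [[-> ->]|ne]; first by rewrite /hat_adj eqxx.
rewrite /hat_adj ne /=.
have key : forall a b c d, a != b -> r a = b -> c != d -> r c = d ->
   (a, b) != (c, d) -> ~~ hat_cond adj a b c d.
  move=> a' b' c' d' ab' rab' cd' rcd' ne0; rewrite /hat_cond.
  have ac : a' != c'.
    apply: contra ne0 => /eqP e; subst c'; by rewrite -rab' -rcd'.
  rewrite (negbTE ac) /=; apply/norP; split.
    apply/eqP => e; subst c'; move: cd'; by rewrite -rcd' -rab' H2 eqxx.
  rewrite negb_and negbK; case: (eqVneq b' d') => [e|//] /=.
  by apply: H3 => //; rewrite rab' rcd'.
case: ifP => _; first exact: key.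
apply: key => //; by rewrite eq_sym.
Qed.

Lemma indep_props S : hat_indep adj S ->
  (forall p, p \in S -> (p.1 < p.2)%N /\ adj p.1 p.2) /\
  (forall p q, p \in S -> q \in S -> p.1 = q.1 -> p = q) /\
  (forall p q, p \in S -> q \in S -> p.2 != q.1) /\
  (forall p q, p \in S -> q \in S -> p != q -> p.2 = q.2 -> adj p.1 q.1).
Proof.
case/andP=> /subsetP sub /forallP H.
have nadj : forall p q, p \in S -> q \in S -> ~~ hat_adj adj p q.
  move=> p q pS qS; move/implyP: (H p) => /(_ pS) /forallP /(_ q) /implyP; exact.
have hv : forall p, p \in S -> (p.1 < p.2)%N /\ adj p.1 p.2.
  by move=> p /sub; rewrite inE => /andP[].
split; first exact: hv.
split.
  move=> p q pS qS e; apply/eqP; apply/negPn/negP => ne.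
  move: (nadj p q pS qS); rewrite /hat_adj ne /= /hat_cond e eqxx.
  by case: ifP.
split.
  move=> p q pS qS; apply/negP => /eqP e.
  case: (eqVneq p q) => [epq|ne].
    by subst q; case: (hv p pS); rewrite e ltnn.
  move: (nadj p q pS qS); rewrite /hat_adj ne /=.
  case: ifP => [_|]; first by rewrite /hat_cond e eqxx orbT.
  move/negbT; rewrite -ltnNge => lt.
  case: (hv q qS) => lt2 _; move: (ltn_trans lt2 lt); by rewrite e ltnn.
move=> p q pS qS ne e.
move: (nadj p q pS qS); rewrite /hat_adj ne /=.
have -> : (p.2 <= q.2)%N by rewrite e.
rewrite /hat_cond e eqxx /= !negb_or => /and3P[_ _ /negPn]; done.
Qed.

Definition rS (S : {set 'I_n * 'I_n}) : {ffun 'I_n -> 'I_n} :=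
  [ffun x => if [pick p in S | p.1 == x] is Some p then p.2 else x].

Lemma rS_spec S : hat_indep adj S -> validf (rS S) /\ phi (rS S) = S.
Proof.
move=> HS; case: (indep_props HS) => hv [h1 [h2 h3]].
have rSE : forall x, (exists2 p, p \in S & p.1 = x) \/ (forall p, p \in S -> p.1 != x).
  move=> x; case: (pickP [pred p in S | p.1 == x]) => [p /andP[pS /eqP px]|none].
    by left; exists p.
  by right => p pS; move: (none p); rewrite /= pS /= => ->.
have rS1 : forall p, p \in S -> rS S p.1 = p.2.
  move=> p pS; rewrite ffunE; case: pickP => [q /andP[qS /eqP qp]|none].
    by rewrite (h1 q p).
  by move: (none p); rewrite /= pS eqxx.
have rS2 : forall x, (forall p, p \in S -> p.1 != x) -> rS S x = x.
  move=> x hx; rewrite ffunE; case: pickP => [q /andP[qS qp]|//].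
  by move: (hx q qS); rewrite qp.
have fix2 : forall p, p \in S -> rS S p.2 = p.2.
  move=> p pS; apply: rS2 => q qS; rewrite eq_sym; exact: h2.
split; last first.
  apply/setP => -[a b]; rewrite inE /=.
  apply/idP/idP.
  - case/andP => ab /eqP rab.
    case: (rSE a) => [[q qS qa]|none]; last by move: ab; rewrite -rab rS2 ?eqxx.
    by rewrite -rab -qa rS1 // -surjective_pairing.
  - move=> pS; rewrite (rS1 _ pS) eqxx andbT.
    by case: (hv _ pS) => /= lt _; rewrite neq_ltn lt.
apply/andP; split.
  apply/forallP => x.
  case: (rSE x) => [[q qS <-]|none].
    by rewrite rS1 // fix2 // eqxx andbT; case: (hv q qS) => /ltnW.
  by rewrite rS2 // rS2 // eqxx leqnn.
apply/forallP => x; apply/forallP => y; apply/implyP => /andP[xy /eqP rxy].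
case: (rSE x) => [[p pS px]|nx]; case: (rSE y) => [[q qS qy]|ny].
- subst x y; rewrite !rS1 // in rxy.
  apply: h3 => //; apply: contra xy => /eqP -> //.
- subst x; rewrite rS1 // rS2 // in rxy; rewrite -rxy.
  by case: (hv p pS).
- subst y; rewrite rS1 // rS2 // in rxy; rewrite rxy adj_sym.
  by case: (hv q qS).
- by move: xy; rewrite -(rS2 _ nx) -(rS2 _ ny) rxy eqxx.
Qed.

Lemma iK k : i_k adj k = #|VR k|.
Proof.
rewrite /i_k -(card_imset _ phi_inj); apply: eq_card => S; rewrite inE.
apply/idP/imsetP.
- case/andP => HS /eqP cS; case: (rS_spec HS) => v e.
  by exists (rS S) => //; rewrite inE v -phi_card e cS eqxx.
- case=> r; rewrite inE => /andP[v /eqP c] ->.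
  by rewrite phi_indep // phi_card c eqxx.
Qed.

Definition psi (r : {ffun 'I_n -> 'I_n}) := preim_partition r [set: 'I_n].

Definition fib (r : {ffun 'I_n -> 'I_n}) x := [set y in [set: 'I_n] | r x == r y].

Lemma psiE r : psi r = [set fib r x | x in [set: 'I_n]].
Proof. by []. Qed.

Lemma fibE r x y : (y \in fib r x) = (r x == r y).
Proof. by rewrite !inE. Qed.

Lemma psi_inj r r' : validf r -> validf r' -> psi r = psi r' -> r = r'.
Proof.
move=> /validP [a1 [a2 a3]] /validP [b1 [b2 b3]] E.
have fibeq : forall x, fib r x = fib r' x.
  move=> x; have : fib r x \in psi r' by rewrite -E psiE; apply: imset_f.
  rewrite psiE => /imsetP [z _ ez].
  have : x \in fib r' z by rewrite -ez fibE.
  rewrite fibE => /eqP zx; apply/setP => y; rewrite ez !fibE zx //.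
apply/ffunP => x; apply: val_inj; apply/eqP; rewrite eqn_leq.
have h1 : r' (r x) = r' x.
  have : r x \in fib r x by rewrite fibE a2.
  by rewrite fibeq fibE => /eqP.
have h2 : r (r' x) = r x.
  have : r' x \in fib r' x by rewrite fibE b2.
  by rewrite -fibeq fibE => /eqP.
apply/andP; split.
  by rewrite -h1; apply: b1.
by rewrite -h2; apply: a1.
Qed.

Lemma psi_card r : validf r -> #|psi r| = (n - #|nfix r|)%N.
Proof.
move=> /validP [a1 [a2 a3]].
have -> : psi r = [set fib r x | x in ~: nfix r].
  apply/setP => B; apply/imsetP/imsetP => -[x xin ->].
    exists (r x); first by rewrite !inE negbK a2.
    by apply/setP => y; rewrite !fibE a2.
  by exists x.
rewrite card_in_imset.
  move: (cardsC (nfix r)); rewrite card_ord.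
  by move: (#|nfix r|) (#|~: nfix r|) => a b e; apply/eqP; rewrite -e addKn.
move=> x y; rewrite !inE !negbK => /eqP fx /eqP fy e.
have : x \in fib r y by rewrite -e fibE.
by rewrite fibE fx fy => /eqP.
Qed.

Lemma psi_part r : validf r ->
  [&& partition (psi r) [set: 'I_n], [forall B in psi r, is_clique adj B] &
   #|psi r| == (n - #|nfix r|)%N].
Proof.
move=> v; rewrite psi_card // eqxx andbT preim_partitionP /=.
case/validP: v => [a1 [a2 a3]].
apply/forallP => B; apply/implyP; rewrite psiE => /imsetP [x _ ->].
apply/forallP => y; apply/implyP; rewrite fibE => /eqP ey.
apply/forallP => z; apply/implyP; rewrite fibE => /eqP ez.
apply/implyP => yz; apply: a3 => //; by rewrite -ey -ez.
Qed.

Definition rP (P : {set {set 'I_n}}) : {ffun 'I_n -> 'I_n} :=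
  [ffun x => [arg max_(y > x in pblock P x) (y : nat)]].

Lemma rP_max P x z : partition P [set: 'I_n] -> z \in pblock P x ->
  (forall w, w \in pblock P x -> (w <= z)%N) -> rP P x = z.
Proof.
move=> /and3P [/eqP cov tI _] zin zmax; rewrite ffunE.
have xin : x \in pblock P x by rewrite mem_pblock cov inE.
case: arg_maxnP => // i iin imax; apply: val_inj; apply/eqP.
by rewrite eqn_leq zmax //=; exact: (imax z zin).
Qed.

Lemma rP_spec P : partition P [set: 'I_n] -> [forall B in P, is_clique adj B] ->
  validf (rP P) /\ psi (rP P) = P.
Proof.
move=> pP cl; have := pP; case/and3P => /eqP cov tI nz.
have xin : forall x, x \in pblock P x by move=> x; rewrite mem_pblock cov inE.
have ex : forall x, rP P x \in pblock P x /\ (forall w, w \in pblock P x -> (w <= rP P x)%N).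
  move=> x; rewrite ffunE; case: arg_maxnP => // i iin imax; split => // w /imax //.
have sameb : forall x y, (pblock P x == pblock P y) = (rP P x == rP P y).
  move=> x y; apply/eqP/eqP => [e|e].
    case: (ex y) => yin ymax; apply: rP_max => //; by rewrite e.
  case: (ex x) => xb _; case: (ex y) => yb _.
  by rewrite -(same_pblock tI xb) e (same_pblock tI yb).
split.
  apply/andP; split.
    apply/forallP => x; case: (ex x) => xb xm; rewrite xm ?xin //=.
    by rewrite -sameb; apply/eqP; apply: same_pblock.
  apply/forallP => x; apply/forallP => y; apply/implyP => /andP [xy e].
  rewrite -sameb in e.
  have : is_clique adj (pblock P x).
    by move/forallP: cl => /(_ (pblock P x)) /implyP; apply; apply: pblock_mem; rewrite cov inE.
  move/forallP => /(_ x) /implyP /(_ (xin x)) /forallP /(_ y) /implyP.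
  by rewrite (eqP e) xin xy => /(_ isT) /implyP; apply.
apply/setP => B; rewrite psiE; apply/imsetP/idP.
  case=> x _ ->.
  have -> : fib (rP P) x = pblock P x.
    apply/setP => y; rewrite fibE -sameb eq_pblock //; by rewrite cov inE.
  by apply: pblock_mem; rewrite cov inE.
move=> BP; have : B != set0 by apply: contraNneq nz => <-.
case/set0Pn => x xB; exists x => //.
apply/setP => y; rewrite fibE -sameb eq_pblock ?cov ?inE //.
by rewrite (def_pblock tI BP xB).
Qed.

Lemma aK k : (k <= n)%N -> a_k adj (n - k) = #|VR k|.
Proof.
move=> kn.
have inj : {in VR k &, injective psi}.
  by move=> r r'; rewrite !inE => /andP[v _] /andP[v' _]; apply: psi_inj.
rewrite /a_k -(card_in_imset inj); apply: eq_card => P; rewrite inE.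
apply/idP/imsetP.
- case/and3P => pP cl /eqP cP; case: (rP_spec pP cl) => v e.
  exists (rP P) => //; rewrite inE v /=.
  have := psi_card v; rewrite e cP => h.
  have le := subset_leq_card (subsetT (nfix (rP P))); rewrite cardsT card_ord in le.
  apply/eqP; move: h le; move: (#|nfix (rP P)|) => a; lia.
- case=> r; rewrite inE => /andP[v /eqP c] ->.
  by move: (psi_part v); rewrite c.
Qed.

Lemma nfix_lt r : (0 < n)%N -> validf r -> (#|nfix r| < n)%N.
Proof.
move=> n0 /validP [a1 _].
have nm : (n.-1 < n)%N by rewrite prednK.
pose m := Ordinal nm.
have mf : m \notin nfix r.
  rewrite inE negbK; apply/eqP/val_inj => /=; apply/eqP; rewrite eqn_leq (a1 m) andbT.
  by have := ltn_ord (r m); lia.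
have : nfix r \subset [set~ m] by apply/subsetP => x xn; rewrite !inE; apply: contraNneq mf => <-.
move/subset_leq_card; rewrite cardsC1 card_ord => h.
by apply: leq_ltn_trans h _; rewrite prednK.
Qed.

Lemma ik0 k : (#|hat_V adj| < k)%N -> i_k adj k = 0%N.
Proof.
move=> h; apply/eqP; rewrite cards_eq0; apply/eqP/setP => S; rewrite !inE.
apply/negbTE/negP => /andP [/andP [sub _] /eqP cS].
by move: (subset_leq_card sub); rewrite cS leqNgt h.
Qed.

End S.

Lemma cond_sub n (adj : rel 'I_n) (a b i j k l : 'I_n) : val b = (n - 1)%N ->
  (i < j)%N -> (k < l)%N ->
  hat_cond (del_edge adj a b) i j k l -> hat_cond adj i j k l.
Proof.
move=> vb ij kl; rewrite /hat_cond /del_edge.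
case/or3P => [->|->|/andP[/eqP jl]]; rewrite ?orbT //; subst l.
rewrite negb_and negbK => /orP [na|e]; first by rewrite eqxx na !orbT.
have := ltn_ord j.
case/orP: e => /andP [/eqP ? /eqP ?]; subst => ?; exfalso; move: vb => /= vb; lia.
Qed.

Lemma coef_sumX m (E : nat -> int) i :
  ((\sum_(k < m) (E k *: 'X^k))`_i = if (i < m)%N then E i else 0)%R.
Proof. by rewrite -poly_def coef_poly. Qed.

Import GRing.Theory.
Local Open Scope ring_scope.
Theorem proposition2 (n : nat) (adj : rel 'I_n)
  (adj_sym : symmetric adj) (adj_irr : irreflexive adj) (n_gt0 : (0 < n)%N) :
  hstar adj = indep_poly_hat adj /\
  (forall a b : 'I_n, val a = (n - 2)%N -> val b = (n - 1)%N -> adj a b ->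
     hat_subgraph (del_edge adj a b) adj).
Proof.
split.
  rewrite /hstar /indep_poly_hat.
  apply/polyP => i.
  rewrite (coef_sumX n (fun k => (-1)^+k * (a_k adj (n-k)%N)%:R)%R).
  rewrite (coef_sumX #|hat_V adj|.+1 (fun k => (-1)^+k * (i_k adj k)%:R)%R).
  case: (ltnP i n) => hin; case: ltnP => hiN.
  - rewrite aK; last exact: ltnW.
    by rewrite iK.
  - rewrite aK; last exact: ltnW.
    by rewrite -iK // (ik0 hiN) mulr0.
  - rewrite iK //; suff -> : VR adj i = set0 by rewrite cards0 mulr0.
    apply/setP => r; rewrite !inE; apply/negbTE/negP => /andP [v /eqP c].
    by move: (nfix_lt n_gt0 v); rewrite c ltnNge hin.
  - by [].
move=> a b va vb ab; split.
  by apply/subsetP => p; rewrite !inE /del_edge => /andP[-> /andP[-> _]].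
move=> [i j] [k l]; rewrite !inE /= => /andP[ij _] /andP[kl _].
rewrite /hat_adj /= => /andP[-> H] /=.
by case: ifP H => _ H; apply: cond_sub H.
Qed.
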